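(* Let $n\ge4$, $\mathcal G\in\mathbb G^n_S$, and let $\mathcal A(\mathcal G_{cyclic})$ be the sum of the $n$ smallest edge weights of $\mathcal G_{cyclic}$ (counted among its $\binom n2$ edges). Then every Hamiltonian circuit of $\mathcal G$ has length at least $T(\mathcal G)+\mathcal A(\mathcal G_{cyclic})$, and the shortest Hamiltonian circuit of $\mathcal G$ has length at most $T(\mathcal G)$.
   Context: $\mathbb G^n_S$ is the space of complete undirected weighted graphs without loops on $V_1,\dots,V_n$ with edge weights $d_{i,j}=d_{j,i}$, identified with $\mathbb R^{\binom n2}$ with the standard inner product. $\mathcal G_{cyclic}$ is the orthogonal projection of $\mathcal G$ onto the orthogonal complement of the subspace of graphs with $d_{j,k}=\omega_j+\omega_k$ for some reals $\omega_j$. $S_S(V_j)=\sum_{k\ne j}d_{j,k}$, $T(\mathcal G)=\frac1{n-1}\sum_jS_S(V_j)$. A Hamiltonian circuit is a closed path visiting every vertex exactly once; its length is the sum of its edge weights. *)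

(* Defs.v *)
From HB Require Import structures.
From mathcomp Require Import all_boot all_order all_algebra all_fingroup.
Set Implicit Arguments. Unset Strict Implicit. Unset Printing Implicit Defensive.
Import Order.TTheory GRing.Theory Num.Theory.
Local Open Scope ring_scope.

(* A complete undirected weighted graph without loops on vertices 'I_n is a
   weight function d : 'I_n -> 'I_n -> R with d i j = d j i; the diagonal
   values d i i are never used. *)
Definition sym_graph (R : Type) (n : nat) (d : 'I_n -> 'I_n -> R) : Prop :=
  forall i j, d i j = d j i.

Definition ginner (R : realFieldType) (n : nat) (x y : 'I_n -> 'I_n -> R) : R :=
  \sum_(j < n) \sum_(k < n | (j < k)%N) x j k * y j k.

Definition in_W (R : realFieldType) (n : nat) (x : 'I_n -> 'I_n -> R) : Prop :=
  exists w : 'I_n -> R, forall j k : 'I_n, (j < k)%N -> x j k = w j + w k.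

(* c is the orthogonal projection of d onto the orthogonal complement of W,
   i.e. c is a graph, d - c lies in W, and c is orthogonal to W. *)
Definition is_cyclic_part (R : realFieldType) (n : nat)
    (d c : 'I_n -> 'I_n -> R) : Prop :=
  [/\ sym_graph c,
      in_W (fun j k => d j k - c j k)
    & forall w : 'I_n -> R, ginner c (fun j k => w j + w k) = 0].

Definition Ssum (R : realFieldType) (n : nat) (d : 'I_n -> 'I_n -> R) (j : 'I_n) : R :=
  \sum_(k < n | k != j) d j k.

Definition Tval (R : realFieldType) (n : nat) (d : 'I_n -> 'I_n -> R) : R :=
  (n.-1)%:R^-1 * \sum_(j < n) Ssum d j.

Definition edge_weights (R : realFieldType) (n : nat) (d : 'I_n -> 'I_n -> R) : seq R :=
  [seq d p.1 p.2 | p <- enum [pred p : 'I_n * 'I_n | (p.1 < p.2)%N]].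

Definition Asmall (R : realFieldType) (n : nat) (d : 'I_n -> 'I_n -> R) : R :=
  \sum_(x <- take n (sort <=%R (edge_weights d))) x.

(* Hamiltonian circuit: a cyclic ordering s(0), s(1), ..., s(n-1), s(0) of
   all vertices, given by a permutation s; its length is the sum of the
   weights of its n edges. *)
Definition ham_length (R : realFieldType) (n : nat) (d : 'I_n -> 'I_n -> R)
    (s : {perm 'I_n}) : R :=
  \sum_(i < n) d (s i) (s (ordS i)).

(* Main.v *)
Require Import Defs.
From HB Require Import structures.
From mathcomp Require Import all_boot all_order all_algebra all_fingroup.
From mathcomp Require Import zify ring lra.
Set Implicit Arguments. Unset Strict Implicit. Unset Printing Implicit Defensive.
Import Order.TTheory GRing.Theory Num.Theory.
Local Open Scope ring_scope.

Lemma exch_ne (R : realFieldType) n (F : 'I_n -> 'I_n -> R) :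
  \sum_a \sum_(b | b != a) F a b = \sum_a \sum_(b | b != a) F b a.
Proof.
under eq_bigr do rewrite big_mkcond.
rewrite exchange_big; apply: eq_bigr => a _.
rewrite [RHS]big_mkcond; apply: eq_bigr => b _; by rewrite eq_sym.
Qed.

Lemma sym_double (R : realFieldType) n (f : 'I_n -> 'I_n -> R) :
  (forall a b, f a b = f b a) ->
  \sum_(a < n) \sum_(b < n | b != a) f a b = 2 * \sum_(a < n) \sum_(b < n | (a < b)%N) f a b.
Proof.
move=> fs.
have E : forall a, \sum_(b < n | b != a) f a b =
   \sum_(b < n | (a < b)%N) f a b + \sum_(b < n | (b < a)%N) f a b.
  move=> a; rewrite (bigID (fun b : 'I_n => (a < b)%N)) /=.
  congr (_ + _); apply: eq_bigl => b.
    case: (ltngtP a b) => h /=; rewrite ?andbT ?andbF //.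
    by apply/eqP => e; rewrite e ltnn in h.
  case: (ltngtP a b) => h /=.
  - by rewrite andbF.
  - by rewrite andbT; apply/eqP => e; rewrite e ltnn in h.
  - by rewrite andbT (ord_inj h) eqxx.
rewrite (eq_bigr _ (fun a _ => E a)) big_split /=.
have -> : \sum_(a < n) \sum_(b < n | (b < a)%N) f a b = \sum_(a < n) \sum_(b < n | (a < b)%N) f a b.
  under eq_bigr do rewrite big_mkcond.
  rewrite exchange_big; apply: eq_bigr => a _.
  rewrite [RHS]big_mkcond; apply: eq_bigr => b _; by rewrite fs.
by rewrite mulr2n mulrDl mul1r.
Qed.

Lemma ginner_W (R : realFieldType) n (c : 'I_n -> 'I_n -> R) (w : 'I_n -> R) :
  (forall a b, c a b = c b a) ->
  ginner c (fun j k => w j + w k) = \sum_(a < n) w a * Ssum c a.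
Proof.
move=> cs.
have fsym : forall a b, c a b * (w a + w b) = c b a * (w b + w a).
  by move=> a b; rewrite cs addrC.
have H := @sym_double R n (fun a b => c a b * (w a + w b)) fsym.
have E : \sum_(a < n) \sum_(b < n | b != a) c a b * (w a + w b) =
         2 * \sum_(a < n) w a * Ssum c a.
  under eq_bigr do under eq_bigr do rewrite mulrDr.
  under eq_bigr do rewrite big_split /=.
  rewrite big_split /=.
  have E1 : \sum_(a < n) \sum_(b < n | b != a) c a b * w a =
            \sum_(a < n) w a * Ssum c a.
    apply: eq_bigr => a _; rewrite /Ssum mulr_sumr.
    by apply: eq_bigr => b _; rewrite mulrC.
  have E2 : \sum_(a < n) \sum_(b < n | b != a) c a b * w b =
            \sum_(a < n) \sum_(b < n | b != a) c a b * w a.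
    rewrite (exch_ne (fun a b => c a b * w b)).
    by apply: eq_bigr => a _; apply: eq_bigr => b _; rewrite cs.
  by rewrite E2 E1 mulr2n mulrDl mul1r.
rewrite /ginner.
move: H; rewrite E => H.
have h2 : (2 : R) != 0 by rewrite pnatr_eq0.
by apply: (mulfI h2); rewrite -H.
Qed.

Lemma rowsum0 (R : realFieldType) n (c : 'I_n -> 'I_n -> R) :
  (forall a b, c a b = c b a) ->
  (forall w : 'I_n -> R, ginner c (fun j k => w j + w k) = 0) ->
  forall j, Ssum c j = 0.
Proof.
move=> cs H j.
have := H (fun a => (a == j)%:R); rewrite ginner_W //.
rewrite (bigD1 j) //= eqxx mul1r big1 ?addr0 //.
by move=> a /negbTE ->; rewrite mul0r.
Qed.

Lemma ordS_neq n (i : 'I_n) : (2 <= n)%N -> ordS i != i.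
Proof.
move=> hn; apply/eqP => /(congr1 val) /=.
have hi := ltn_ord i.
case: (ltnP i.+1 n) => h1; first by rewrite (modn_small h1); lia.
have -> : i.+1 = n by lia.
by rewrite modnn; lia.
Qed.

Lemma Tval_eq (R : realFieldType) n (d c : 'I_n -> 'I_n -> R) (w : 'I_n -> R) :
  (2 <= n)%N ->
  (forall j k, j != k -> d j k = c j k + w j + w k) ->
  (forall j, Ssum c j = 0) ->
  Tval d = 2 * \sum_(a < n) w a.
Proof.
move=> hn hdc hrow.
have E : \sum_(j < n) Ssum d j =
   \sum_(j < n) \sum_(k < n | k != j) w j + \sum_(j < n) \sum_(k < n | k != j) w k.
  have P : forall j, Ssum d j = Ssum c j + (\sum_(k < n | k != j) w j + \sum_(k < n | k != j) w k).
    move=> j; rewrite /Ssum -!big_split /=.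
    apply: eq_bigr => k kj; rewrite hdc 1?eq_sym //; ring.
  rewrite -big_split /=; apply: eq_bigr => j _; by rewrite P hrow add0r.
have E2 : \sum_(j < n) \sum_(k < n | k != j) w k = \sum_(j < n) \sum_(k < n | k != j) w j.
  exact: (exch_ne (fun j k => w k)).
have E3 : \sum_(j < n) \sum_(k < n | k != j) w j = (\sum_(a < n) w a) * (n.-1)%:R.
  rewrite mulr_suml; apply: eq_bigr => j _.
  by rewrite sumr_const mulr_natr cardC1 card_ord.
rewrite /Tval.
transitivity (n.-1%:R^-1 * ((\sum_(a < n) w a) * n.-1%:R + (\sum_(a < n) w a) * n.-1%:R)).
  congr (_ * _); rewrite -E3 -{2}E2 -E; reflexivity.
have hn1 : (n.-1)%:R != 0 :> R by rewrite pnatr_eq0; lia.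
by field.
Qed.

Definition Hc (R : realFieldType) n (c : 'I_n -> 'I_n -> R) (s : {perm 'I_n}) : R :=
  \sum_(i < n) c (s i) (s (ordS i)).

Lemma ham_eq (R : realFieldType) n (d c : 'I_n -> 'I_n -> R) (w : 'I_n -> R)
   (s : {perm 'I_n}) :
  (2 <= n)%N ->
  (forall j k, j != k -> d j k = c j k + w j + w k) ->
  ham_length d s = Hc c s + 2 * \sum_(a < n) w a.
Proof.
move=> hn hdc; rewrite /ham_length /Hc.
rewrite (eq_bigr (fun i => c (s i) (s (ordS i)) + w (s i) + w (s (ordS i)))); last first.
  by move=> i _; apply: hdc; rewrite (inj_eq perm_inj) eq_sym ordS_neq.
rewrite !big_split /=.
have S1 : \sum_(i < n) w (s i) = \sum_(i < n) w i.
  by rewrite [RHS](reindex_inj (@perm_inj _ s)).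
have S2 : \sum_(i < n) w (s (ordS i)) = \sum_(i < n) w i.
  by rewrite [RHS](reindex_inj (inj_comp (@perm_inj _ s) (@ordS_inj n))).
rewrite S1 S2; ring.
Qed.

Lemma perm2 n (a b a' b' : 'I_n) : a != b -> a' != b' ->
  exists q : {perm 'I_n}, q a' = a /\ q b' = b.
Proof.
move=> hab hab'.
set q1 := tperm a' a; set b'' := q1 b'.
exists (q1 * tperm b'' b)%g; rewrite !permM tpermL; split; last by rewrite tpermL.
apply: tpermD; last by rewrite eq_sym.
by rewrite /b'' -[X in _ != X](tpermL a' a) (inj_eq perm_inj) eq_sym.
Qed.

Lemma part2 (R : realFieldType) n (c : 'I_n -> 'I_n -> R) :
  (2 <= n)%N -> (forall a b, c a b = c b a) -> (forall j, Ssum c j = 0) ->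
  exists s : {perm 'I_n}, Hc c s <= 0.
Proof.
move=> hn cs hrow.
pose K (a b : 'I_n) := \sum_(p : {perm 'I_n}) c (p a) (p b).
have Kinv : forall a b a' b', a != b -> a' != b' -> K a b = K a' b'.
  move=> a b a' b' hab hab'; have [q [ea eb]] := perm2 hab hab'.
  rewrite /K -ea -eb.
  rewrite [RHS](reindex_inj (mulgI q)) /=.
  by apply: eq_bigr => p _; rewrite !permM.
have Z : \sum_(a < n) \sum_(b < n | b != a) K a b = 0.
  rewrite /K.
  under eq_bigr do rewrite exchange_big.
  rewrite exchange_big /= big1 // => p _.
  transitivity (\sum_(a < n) Ssum c a); last by rewrite big1.
  rewrite [RHS](reindex_inj (@perm_inj _ p)); apply: eq_bigr => a _.
  rewrite /Ssum [RHS](reindex_inj (@perm_inj _ p)) /=.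
  by apply: eq_bigl => b; rewrite (inj_eq perm_inj).
have n0 : (0 < n)%N by lia.
pose a0 : 'I_n := Ordinal n0.
pose K0 := K a0 (ordS a0).
have hK : forall a b, b != a -> K a b = K0.
  by move=> a b hb; apply: Kinv; rewrite 1?eq_sym // ordS_neq.
have K00 : K0 = 0.
  move: Z.
  rewrite (eq_bigr (fun a => K0 *+ n.-1)); last first.
    move=> a _; rewrite (eq_bigr (fun _ => K0)); last by move=> b hb; apply: hK.
    by rewrite sumr_const cardC1 card_ord.
  rewrite sumr_const card_ord -mulrnA => /eqP.
  rewrite mulrn_eq0 => /orP [/eqP h|/eqP //].
  have : (n.-1 * n)%N != 0%N by rewrite muln_eq0; apply/norP; split; lia.
  by rewrite h.
have Zs : \sum_(p : {perm 'I_n}) Hc c p = 0.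
  rewrite /Hc exchange_big /= big1 // => i _.
  by rewrite -[RHS]K00 -(hK i (ordS i)) ?ordS_neq.
case: (boolP [exists s, Hc c s <= 0]) => [/existsP [s hs]|/existsPn H]; first by exists s.
have : 0 < \sum_(p : {perm 'I_n}) Hc c p.
  rewrite (bigD1 1%g) //=; apply: ltr_pwDl.
    by have := H 1%g; rewrite real_ltNge ?num_real.
  by apply: sumr_ge0 => p _; apply: ltW; have := H p; rewrite real_ltNge ?num_real.
by rewrite Zs ltxx.
Qed.
Lemma sorted_take_le (R : realFieldType) (L : seq R) :
  sorted <=%R L -> forall s, subseq s L ->
  \sum_(x <- take (size s) L) x <= \sum_(x <- s) x.
Proof.
elim: L => [|x L IH] /= HL s Hs.
  by case: s Hs => [|y s] //= _; rewrite big_nil.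
have HL' : sorted <=%R L by apply: path_sorted HL.
have Hmin : all (fun y => x <= y) L by apply: (order_path_min le_trans HL).
case: s Hs => [|y s] /=; first by rewrite !big_nil.
case: eqP => [-> Hs|_ Hs].
  rewrite /= !big_cons; apply: lerD => //; exact: IH.
have Hsz := size_subseq Hs.
apply: (le_trans _ (IH HL' _ Hs)); rewrite /= big_cons.
rewrite (take_nth 0); last by move: Hsz => /=.
rewrite -cats1 big_cat big_seq1 /= addrC; apply: lerD => //.
by move/allP: Hmin; apply; apply: mem_nth; move: Hsz => /=.
Qed.
Lemma ordSS n (i : 'I_n) : (3 <= n)%N -> ordS (ordS i) != i.
Proof.
move=> hn; apply/eqP => /(congr1 val) /=.
have hi := ltn_ord i.
case: (ltnP i.+1 n) => h1.
  rewrite (modn_small h1).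
  case: (ltnP i.+2 n) => h2; first by rewrite (modn_small h2); lia.
  have -> : i.+2 = n by lia.
  by rewrite modnn; lia.
have -> : i.+1 = n by lia.
by rewrite modnn modn_small; lia.
Qed.

Definition mm n (x y : 'I_n) : 'I_n * 'I_n := if (x < y)%N then (x, y) else (y, x).

Lemma mm_inj n (x y x' y' : 'I_n) : mm x y = mm x' y' ->
  (x = x' /\ y = y') \/ (x = y' /\ y = x').
Proof.
rewrite /mm; case: ifP => _; case: ifP => _ [e1 e2]; subst; by [left|right].
Qed.

Lemma mmP n (x y : 'I_n) : x != y -> ((mm x y).1 < (mm x y).2)%N.
Proof.
rewrite /mm => hxy; case: ifP => //= /negbT; rewrite -leqNgt leq_eqVlt => /orP [/eqP h|//].
by move: hxy; rewrite (ord_inj h) eqxx.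
Qed.

Lemma part1 (R : realFieldType) n (c : 'I_n -> 'I_n -> R) (s : {perm 'I_n}) :
  (3 <= n)%N -> (forall a b, c a b = c b a) -> Asmall c <= Hc c s.
Proof.
move=> hn cs.
pose F := fun p : 'I_n * 'I_n => c p.1 p.2.
pose P := [pred p : 'I_n * 'I_n | (p.1 < p.2)%N].
pose Q := [seq mm (s i) (s (ordS i)) | i <- enum 'I_n].
have hne : forall i : 'I_n, s i != s (ordS i).
  by move=> i; rewrite (inj_eq perm_inj) eq_sym ordS_neq //; lia.
have Quniq : uniq Q.
  rewrite map_inj_uniq ?enum_uniq // => i i' /mm_inj [[/perm_inj -> //]|[e1 e2]].
  have := ordSS i' hn.
  by rewrite -(perm_inj e1) (perm_inj e2) eqxx.
have QP : forall x, x \in Q -> P x.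
  by move=> x /mapP [i _ ->]; rewrite /P inE mmP.
pose Rr := [seq x <- enum P | x \notin Q].
have Hperm : perm_eq (enum P) (Q ++ Rr).
  apply: uniq_perm; first exact: enum_uniq.
    rewrite cat_uniq Quniq filter_uniq ?enum_uniq // andbT /=.
    by apply/hasPn => x; rewrite mem_filter => /andP [].
  move=> x; rewrite mem_enum mem_cat mem_filter mem_enum.
  by case xQ: (x \in Q) => /=; [apply: QP|].
have HE : edge_weights c = map F (enum P) by [].
have Hsort : sort <=%R (edge_weights c) = sort <=%R (map F Q ++ map F Rr).
  apply/perm_sort_leP; rewrite HE -map_cat; exact: perm_map.
have Hsub : subseq (sort <=%R (map F Q)) (sort <=%R (map F Q ++ map F Rr)).
  by apply: subseq_sort_le; apply: prefix_subseq.
have := sorted_take_le (sort_le_sorted _) Hsub.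
have szQ : size Q = n by rewrite size_map size_enum_ord.
rewrite size_sort size_map szQ -Hsort.
move=> H. rewrite /Asmall. apply: le_trans; first exact: H.
have EQ : \sum_(x <- map F Q) x = Hc c s.
  rewrite big_map /Q big_map big_enum /Hc /=.
  apply: eq_big => // i _; rewrite /F /mm; case: ifP => //= _.
by rewrite (perm_big _ (permEl (perm_sort _ _))) EQ.
Qed.

Unset Implicit Arguments.
Theorem corollary7 (R : realFieldType) (n : nat) (d c : 'I_n -> 'I_n -> R) :
  (4 <= n)%N -> sym_graph d -> is_cyclic_part d c ->
  (forall s : {perm 'I_n}, Tval d + Asmall c <= ham_length d s) /\
  (exists s : {perm 'I_n}, ham_length d s <= Tval d).
Proof.
move=> hn hd [cs [w hw] horth].
have hdc : forall j k, j != k -> d j k = c j k + w j + w k.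
  move=> j k; case: (ltngtP j k) => h hjk.
  - have := hw j k h; lra.
  - have := hw k j h; rewrite hd cs; lra.
  - by move: hjk; rewrite (ord_inj h) eqxx.
have hrow := rowsum0 cs horth.
have hn2 : (2 <= n)%N by lia.
have hn3 : (3 <= n)%N by lia.
have hT := Tval_eq hn2 hdc hrow.
split.
  move=> s; rewrite (ham_eq s hn2 hdc) hT.
  have := part1 s hn3 cs; lra.
have [s hs] := part2 hn2 cs hrow.
exists s; rewrite (ham_eq s hn2 hdc) hT; lra.
Qed.
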